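(* Let $G$ be a finite group, $k$ a field of characteristic $p>0$, and $P$ a Sylow $p$-subgroup of $G$. Then $\operatorname{ed}\Omega^{i}(kP\text{-mod})=\operatorname{ed}\Omega^{i}(kG\text{-mod})$ for each $i\in\mathbb N\cup\{\infty\}$.
   Context: $\Omega^0(\Lambda\text{-mod})=\Lambda\text{-mod}$; for $n\ge1$, $\Omega^n(\Lambda\text{-mod})$ is the full subcategory of finitely generated modules $K$ with an exact sequence $0\to K\to P^0\to\cdots\to P^{n-1}\to M\to0$, $P^j$ projective; $\Omega^\infty(\Lambda\text{-mod})$ is the full subcategory of modules $K$ with an exact sequence $0\to K\to P^0\to P^1\to\cdots$, $P^j$ projective. For subcategories $\mathcal T_1,\mathcal T_2$, $\mathcal T_1\bullet\mathcal T_2:=\operatorname{add}\{X\mid\exists$ exact $0\to T_1\to X\to T_2\to0$, $T_i\in\mathcal T_i\}$; $[T]_0=\{0\}$, $[T]_1=\operatorname{add}(T)$, $[T]_n=[T]_1\bullet[T]_{n-1}$; $\operatorname{ed}\mathcal C=\inf\{n\ge0\mid\mathcal C\subseteq[T]_{n+1}$ for some module $T\}$. *)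

(* Defs.v *)
From mathcomp Require Import all_boot all_order all_algebra all_fingroup all_solvable.
From mathcomp Require Import mxrepresentation.
From Stdlib Require Import ClassicalEpsilon.
Set Implicit Arguments. Unset Strict Implicit. Unset Printing Implicit Defensive.
Import GRing.Theory.
Local Open Scope ring_scope.

(* Finitely generated kG-modules: finite-dimensional matrix representations
   (row vectors, acting by right multiplication). *)
Record kmod (F : fieldType) (gT : finGroupType) (G : {group gT}) :=
  KMod { kdim : nat; krep : mx_representation F G kdim }.
Arguments KMod {F gT G} kdim krep.

Section Modules.
Variables (F : fieldType) (gT : finGroupType) (G : {group gT}).
Local Notation mod := (kmod F G).

Definition subcat := mod -> Prop.

Definition is_hom (M N : mod) (f : 'M[F]_(kdim M, kdim N)) : Prop :=
  forall x, x \in G -> krep M x *m f = f *m krep N x.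

Definition projective (P : mod) : Prop :=
  forall (M N : mod) (g : 'M[F]_(kdim M, kdim N)) (h : 'M[F]_(kdim P, kdim N)),
    is_hom g -> row_full g -> is_hom h ->
    exists l : 'M[F]_(kdim P, kdim M), is_hom l /\ l *m g = h.

(* add C : direct summands of finite direct sums  Y_0 (+) ... (+) Y_(m-1)
   of modules Y_j in C : X is such a summand iff there are homs
   f_j : X -> Y_j, g_j : Y_j -> X with sum_j f_j g_j = id_X. *)
Definition addC (C : subcat) : subcat := fun X =>
  exists m (Y : 'I_m -> mod)
    (f : forall j, 'M[F]_(kdim X, kdim (Y j)))
    (g : forall j, 'M[F]_(kdim (Y j), kdim X)),
    (forall j, [/\ C (Y j), is_hom (f j) & is_hom (g j)]) /\
    \sum_(j < m) (f j *m g j) = 1%:M.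

Definition short_exact (A X B : mod) (f : 'M[F]_(kdim A, kdim X))
  (g : 'M[F]_(kdim X, kdim B)) : Prop :=
  [/\ is_hom f, is_hom g, row_free f, row_full g & (f == kermx g)%MS].

Definition bullet (T1 T2 : subcat) : subcat :=
  addC (fun X => exists (A B : mod) f g,
           T1 A /\ T2 B /\ @short_exact A X B f g).

Definition zero_sub : subcat := fun X => kdim X = 0%N.

Fixpoint layer (T : mod) (n : nat) : subcat :=
  match n with
  | 0 => zero_sub
  | 1 => addC (fun Y => Y = T)
  | n'.+1 => bullet (addC (fun Y => Y = T)) (layer T n')
  end.

Definition complex_hom (X : nat -> mod)
  (d : forall j, 'M[F]_(kdim (X j), kdim (X j.+1))) : Prop :=
  forall j, is_hom (d j).

Inductive nat_inf := Fin of nat | Inf.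

(* For n >= 1:  K = X_0, P^j = X_(j+1) (j < n), M = X_(n+1),
   exact sequence 0 -> K -> P^0 -> ... -> P^(n-1) -> M -> 0.
   For i = Inf: 0 -> K = X_0 -> X_1 -> X_2 -> ... with all X_(j+1) projective. *)
Definition Omega (i : nat_inf) : subcat := fun K =>
  match i with
  | Fin 0 => True
  | Fin n => exists (X : nat -> mod) (d : forall j, 'M[F]_(kdim (X j), kdim (X j.+1))),
      [/\ X 0%N = K, complex_hom d, row_free (d 0%N),
          (forall j, (j < n)%N -> projective (X j.+1) /\ (d j == kermx (d j.+1))%MS)
        & row_full (d n)]
  | Inf => exists (X : nat -> mod) (d : forall j, 'M[F]_(kdim (X j), kdim (X j.+1))),
      [/\ X 0%N = K, complex_hom d, row_free (d 0%N)
        & (forall j, projective (X j.+1) /\ (d j == kermx (d j.+1))%MS)]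
  end.

Definition ed_bound (C : subcat) (n : nat) : Prop :=
  exists T : mod, forall X, C X -> layer T n.+1 X.

Definition ed (C : subcat) : nat_inf :=
  match excluded_middle_informative (exists n, ed_bound C n) with
  | left _ => Fin (epsilon (inhabits 0%N)
                  (fun n => ed_bound C n /\ forall m, ed_bound C m -> (n <= m)%N))
  | right _ => Inf
  end.

End Modules.

(* Main.v *)
Require Import Defs.
From mathcomp Require Import all_boot all_order all_algebra all_fingroup all_solvable.
From mathcomp Require Import mxrepresentation.
From mathcomp Require Import zify.
From Stdlib Require Import ClassicalEpsilon Classical.
Require Import Defs.
Set Implicit Arguments. Unset Strict Implicit. Unset Printing Implicit Defensive.
Import GRing.Theory.
Local Open Scope ring_scope.

Module P1.

Section Basics.
Variables (F : fieldType) (gT : finGroupType) (G : {group gT}).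
Local Notation mod := (kmod F G).

Lemma hom_mul (M N L : mod) (f : 'M_(kdim M, kdim N)) (g : 'M_(kdim N, kdim L)) :
  is_hom (M:=M) (N:=N) f -> is_hom (M:=N) (N:=L) g -> is_hom (M:=M) (N:=L) (f *m g).
Proof. by move=> hf hg x Gx; rewrite mulmxA (hf x Gx) -!mulmxA (hg x Gx). Qed.

Lemma hom_scale (M N : mod) (a : F) (f : 'M_(kdim M, kdim N)) :
  is_hom (M:=M) (N:=N) f -> is_hom (M:=M) (N:=N) (a *: f).
Proof. by move=> hf x Gx; rewrite -scalemxAr hf // scalemxAl. Qed.

Lemma hom0 (M N : mod) : is_hom (M:=M) (N:=N) 0.
Proof. by move=> x Gx; rewrite mulmx0 mul0mx. Qed.

Lemma hom1 (M : mod) : is_hom (M:=M) (N:=M) 1%:M.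
Proof. by move=> x Gx; rewrite mulmx1 mul1mx. Qed.

Lemma SE_iff (A X B : mod) f g :
  @short_exact F gT G A X B f g <->
  [/\ is_hom f, is_hom g, row_free f, row_full g &
      f *m g = 0 /\ kdim X = (kdim A + kdim B)%N].
Proof.
split.
  case=> hf hg rf rg e; split => //; split.
    by apply/sub_kermxP; case/andP: e.
  have := rank_leq_row g; rewrite (eqP rg) => le.
  move: (eqmx_rank e); rewrite mxrank_ker.
  move: rf rg; rewrite /row_free /row_full => /eqP -> /eqP ->; lia.
case=> hf hg rf rg [fg0 dX]; split => //.
have sub : (f <= kermx g)%MS by apply/sub_kermxP.
rewrite -(mxrank_leqif_eq sub) mxrank_ker.
move: rf rg; rewrite /row_free /row_full => /eqP -> /eqP ->.
rewrite dX; lia.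
Qed.

Lemma addC_summand (C : subcat F G) (X Y : mod) (f : 'M_(kdim X, kdim Y)) g :
  is_hom (M:=X) (N:=Y) f -> is_hom (M:=Y) (N:=X) g -> f *m g = 1%:M ->
  addC C Y -> addC C X.
Proof.
move=> hf hg fg [m [Z [fj [gj [H Hs]]]]].
exists m, Z, (fun j => f *m fj j), (fun j => gj j *m g); split.
  move=> j; case: (H j) => c h1 h2; split => //.
    exact: hom_mul.
  exact: hom_mul.
rewrite -fg -{2}[f]mulmx1 -Hs mulmx_sumr mulmx_suml; apply: eq_bigr => j _.
by rewrite !mulmxA.
Qed.

Lemma layer_summand (T : mod) n (X Y : mod) (f : 'M_(kdim X, kdim Y)) g :
  is_hom (M:=X) (N:=Y) f -> is_hom (M:=Y) (N:=X) g -> f *m g = 1%:M ->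
  layer T n.+1 Y -> layer T n.+1 X.
Proof. by case: n => [|n]; apply: addC_summand. Qed.

End Basics.

Section Transport.
Variables (F : fieldType) (gT : finGroupType) (G1 G2 : {group gT}).
Variable Fo : kmod F G1 -> kmod F G2.
Variable Fm : forall M N : kmod F G1,
  'M[F]_(kdim M, kdim N) -> 'M[F]_(kdim (Fo M), kdim (Fo N)).
Hypothesis FmM : forall M N L (f : 'M_(kdim M, kdim N)) (g : 'M_(kdim N, kdim L)),
  Fm (f *m g) = Fm f *m Fm g.
Hypothesis Fm1 : forall M, Fm (1%:M : 'M_(kdim M)) = 1%:M.
Hypothesis FmD : forall M N (f g : 'M_(kdim M, kdim N)), Fm (f + g) = Fm f + Fm g.
Hypothesis Fm0 : forall M N, Fm (0 : 'M_(kdim M, kdim N)) = 0.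
Hypothesis Fhom : forall M N f, is_hom (M:=M) (N:=N) f -> is_hom (Fm f).
Hypothesis FSE : forall A X B f g, @short_exact F gT G1 A X B f g ->
  @short_exact F gT G2 (Fo A) (Fo X) (Fo B) (Fm f) (Fm g).
Hypothesis F0 : forall M, kdim M = 0%N -> kdim (Fo M) = 0%N.

Lemma addC_map (C : subcat F G1) (C' : subcat F G2) X :
  (forall Y, C Y -> C' (Fo Y)) -> addC C X -> addC C' (Fo X).
Proof.
move=> hC [m [Y [f [g [H Hs]]]]].
exists m, (fun j => Fo (Y j)), (fun j => Fm (f j)), (fun j => Fm (g j)); split.
  by move=> j; case: (H j) => c h1 h2; split; [apply: hC | apply: Fhom | apply: Fhom].
rewrite -Fm1 -Hs (big_morph (@Fm X X) (@FmD X X) (@Fm0 X X)).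
by apply: eq_bigr => j _; rewrite FmM.
Qed.

Lemma layer_map T n X : layer T n X -> layer (Fo T) n (Fo X).
Proof.
elim: n X => [|n IH] X; first exact: F0.
case: n IH => [|n] IH.
  by apply: addC_map => Y ->.
apply: addC_map => Y [A [B [f [g [hA [hB hse]]]]]].
exists (Fo A), (Fo B), (Fm f), (Fm g); split; last split.
- by apply: (addC_map (C := fun Y => Y = T)) hA => Z ->.
- exact: IH.
- exact: FSE.
Qed.

End Transport.

End P1.
Import P1.

Module P2.

Section Cosets.
Variables (gT : finGroupType) (G H : {group gT}).
Hypothesis sHG : H \subset G.

Lemma H_in_rcosets : (H : {set gT}) \in rcosets H G.
Proof. by apply/rcosetsP; exists 1%g; rewrite ?group1 ?rcoset1. Qed.

Definition ncos := #|rcosets H G|.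
Definition coset_i (i : 'I_ncos) : {set gT} := enum_val i.
Definition rr (i : 'I_ncos) : gT := repr (coset_i i).
Definition sig (x : gT) (i : 'I_ncos) : 'I_ncos :=
  enum_rank_in H_in_rcosets (H :* (rr i * x))%g.
Definition hh (x : gT) (i : 'I_ncos) : gT := (rr i * x * (rr (sig x i))^-1)%g.

Lemma coset_iP i : exists2 y, y \in G & coset_i i = (H :* y)%g.
Proof. by apply/rcosetsP; exact: enum_valP. Qed.

Lemma rr_coset i : (H :* rr i)%g = coset_i i.
Proof. by rewrite /rr; case: (coset_iP i) => y Gy ->; rewrite rcoset_repr. Qed.

Lemma rrG i : rr i \in G.
Proof.
case: (coset_iP i) => y Gy e; rewrite /rr e.
have := mem_repr_rcoset H y; case/rcosetP => h Hh ->.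
by rewrite groupM // (subsetP sHG).
Qed.

Lemma coset_sig x i : x \in G -> coset_i (sig x i) = (H :* (rr i * x))%g.
Proof.
move=> Gx; rewrite /coset_i /sig enum_rankK_in //.
by apply/rcosetsP; exists (rr i * x)%g; rewrite ?groupM ?rrG.
Qed.

Lemma hhH x i : x \in G -> hh x i \in H.
Proof.
move=> Gx; have : (rr i * x)%g \in (H :* rr (sig x i))%g.
  by rewrite rr_coset coset_sig // rcoset_refl.
case/rcosetP => h Hh e; by rewrite /hh e mulgK.
Qed.

Lemma sig1 i : sig 1 i = i.
Proof.
by rewrite /sig mulg1 rr_coset /coset_i enum_valK_in.
Qed.

Lemma hh1 i : hh 1 i = 1%g.
Proof. by rewrite /hh sig1 mulg1 mulgV. Qed.

Lemma sigM x y i : x \in G -> y \in G -> sig (x * y) i = sig y (sig x i).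
Proof.
move=> Gx Gy; rewrite {1}/sig; congr (enum_rank_in _ _).
by rewrite [in RHS]rcosetM rr_coset coset_sig // -rcosetM mulgA.
Qed.

Lemma hhM x y i : x \in G -> y \in G -> hh (x * y) i = (hh x i * hh y (sig x i))%g.
Proof.
move=> Gx Gy; rewrite /hh (sigM _ Gx Gy).
by rewrite !mulgA mulgKV.
Qed.

Lemma sig_eq x i j : x \in G -> (sig x i == j) = (i == sig x^-1 j).
Proof.
move=> Gx; apply/eqP/eqP => [<-|->].
  by rewrite -sigM ?groupV // mulgV sig1.
by rewrite -sigM ?groupV // mulVg sig1.
Qed.

Definition i0 : 'I_ncos := enum_rank_in H_in_rcosets (H : {set gT}).

Lemma rr_i0 : rr i0 = 1%g.
Proof. by rewrite /rr /coset_i /i0 enum_rankK_in ?H_in_rcosets // repr_group. Qed.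

Lemma sig_i0 x : x \in H -> sig x i0 = i0.
Proof. by move=> Hx; rewrite /sig rr_i0 mul1g rcoset_id. Qed.

Lemma hh_i0 x : x \in H -> hh x i0 = x.
Proof. by move=> Hx; rewrite /hh sig_i0 // rr_i0 mul1g invg1 mulg1. Qed.

End Cosets.

End P2.
Import P2.

Module P3.

Section Induction.
Variables (F : fieldType) (gT : finGroupType) (G H : {group gT}).
Hypothesis sHG : H \subset G.
Local Notation m := (ncos G H).
Local Notation sig := (@sig gT G H).
Local Notation hh := (@hh gT G H).
Local Notation rr := (@rr gT G H).

Section OneMod.
Variable N : kmod F H.
Local Notation d := (kdim N).

Definition IndMx (x : gT) : 'M[F]_(\sum_(i < m) d) :=
  @mxblock _ m m (fun _ => d) (fun _ => d)
    (fun i j => if j == sig x i then krep N (hh x i) else 0).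

Lemma mx1_block (k : nat) :
  (1%:M : 'M[F]_(\sum_(i < m) k)) =
  @mxblock _ m m (fun _ => k) (fun _ => k) (fun i j => if i == j then 1%:M else 0).
Proof.
rewrite -(mxdiagZ (p_ := fun _ => k) 1) /mxdiag; apply: eq_mxblock => i j.
by case: eqP => // _; rewrite conform_mx_id.
Qed.

Lemma IndMx_repr : mx_repr G IndMx.
Proof.
split.
  rewrite mx1_block /IndMx; apply: eq_mxblock => i j.
  by rewrite sig1 hh1 repr_mx1 eq_sym.
move=> x y Gx Gy; rewrite /IndMx mul_mxblock; apply: eq_mxblock => i k.
rewrite (bigD1 (sig x i)) //= big1 ?addr0 => [|j /negbTE ->]; last by rewrite mul0mx.
rewrite eqxx -(sigM sHG) // (hhM sHG) // repr_mxM ?(hhH sHG) //.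
by case: eqP; rewrite ?mulmx0.
Qed.

Definition Ind : kmod F G := KMod (\sum_(i < m) d) (MxRepresentation IndMx_repr).

End OneMod.

Definition Indm (N N' : kmod F H) (f : 'M[F]_(kdim N, kdim N')) :
  'M[F]_(kdim (Ind N), kdim (Ind N')) :=
  @mxblock _ m m (fun _ => kdim N) (fun _ => kdim N') (fun i j => if i == j then f else 0).

Lemma IndmM (M N L : kmod F H) (f : 'M_(kdim M, kdim N)) (g : 'M_(kdim N, kdim L)) :
  Indm (f *m g) = Indm f *m Indm g.
Proof.
rewrite /Indm mul_mxblock; apply: eq_mxblock => i k.
rewrite (bigD1 i) //= big1 ?addr0 => [|j /negbTE]; last by rewrite eq_sym => ->; rewrite mul0mx.
by rewrite eqxx; case: eqP; rewrite ?mulmx0.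
Qed.

Lemma Indm1 (M : kmod F H) : Indm (1%:M : 'M_(kdim M)) = 1%:M.
Proof. by rewrite mx1_block. Qed.

Lemma IndmD (M N : kmod F H) (f g : 'M_(kdim M, kdim N)) : Indm (f + g) = Indm f + Indm g.
Proof. by rewrite /Indm -mxblockD; apply: eq_mxblock => i j; case: eqP; rewrite ?addr0. Qed.

Lemma Indm0 (M N : kmod F H) : Indm (0 : 'M_(kdim M, kdim N)) = 0.
Proof. by rewrite /Indm -mxblock0; apply: eq_mxblock => i j; case: eqP. Qed.

Lemma Indm_hom (M N : kmod F H) (f : 'M_(kdim M, kdim N)) :
  is_hom (M:=M) (N:=N) f -> is_hom (M:=Ind M) (N:=Ind N) (Indm f).
Proof.
move=> hf x Gx /=; rewrite /IndMx /Indm !mul_mxblock; apply: eq_mxblock => i k.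
rewrite (bigD1 (sig x i)) //= big1 ?addr0 => [|j /negbTE ->]; last by rewrite mul0mx.
rewrite [in RHS](bigD1 i) //= big1 ?addr0 => [|j /negbTE ji]; last by rewrite eq_sym ji mul0mx.
case: (eqVneq (sig x i) k) => [|ne]; first by rewrite !eqxx hf ?(hhH sHG).
by rewrite ?eqxx !mulmx0.
Qed.

Lemma Ind_SE A X B f g : @short_exact F gT H A X B f g ->
  @short_exact F gT G (Ind A) (Ind X) (Ind B) (Indm f) (Indm g).
Proof.
case/SE_iff => hf hg rf rg [fg dX]; apply/SE_iff; split.
- exact: Indm_hom.
- exact: Indm_hom.
- by case/row_freeP: rf => B' e; apply/row_freeP; exists (Indm B'); rewrite -IndmM e Indm1.
- by case/row_fullP: rg => B' e; apply/row_fullP; exists (Indm B'); rewrite -IndmM e Indm1.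
split; first by rewrite -IndmM fg Indm0.
by rewrite /= dX big_split.
Qed.

Lemma Ind0 (M : kmod F H) : kdim M = 0%N -> kdim (Ind M) = 0%N.
Proof. by move=> e; rewrite /= e big1. Qed.

Lemma layer_Ind (T : kmod F H) n X : layer T n X -> layer (Ind T) n (Ind X).
Proof.
apply: (layer_map (Fm := Indm)).
- exact: IndmM.
- exact: Indm1.
- exact: IndmD.
- exact: Indm0.
- exact: Indm_hom.
- exact: Ind_SE.
- exact: Ind0.
Qed.

Definition Res (M : kmod F G) : kmod F H := KMod (kdim M) (subg_repr (krep M) sHG).

Lemma Res_hom (M N : kmod F G) (f : 'M_(kdim M, kdim N)) :
  is_hom (M:=M) (N:=N) f -> is_hom (M:=Res M) (N:=Res N) f.
Proof. by move=> hf x Hx; apply: hf; apply: (subsetP sHG). Qed.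

Lemma layer_Res (T : kmod F G) n X : layer T n X -> layer (Res T) n (Res X).
Proof.
apply: (@layer_map F gT G H Res (fun M N (f : 'M_(kdim M, kdim N)) => f)) => //.
- exact: Res_hom.
- move=> A X' B f g /SE_iff [hf hg rf rg [fg dX]]; apply/SE_iff; split => //.
  + exact: Res_hom.
  + exact: Res_hom.
Qed.

End Induction.

End P3.
Import P3.

Module P4.

Section Summands.
Variables (F : fieldType) (gT : finGroupType) (G H : {group gT}).
Hypothesis sHG : H \subset G.
Local Notation m := (ncos G H).
Local Notation sig := (@sig gT G H).
Local Notation hh := (@hh gT G H).
Local Notation rr := (@rr gT G H).

Lemma sig_sigV x k : x \in G -> sig x (sig (x^-1)%g k) = k.
Proof. by move=> Gx; rewrite -(sigM sHG) ?groupV // mulVg sig1. Qed.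

Section E1.
Variable M : kmod F G.
Local Notation rho := (krep M).

Definition piE : 'M[F]_(kdim M, kdim (Ind sHG (Res sHG M))) :=
  @mxrow _ m (fun _ => kdim M) (kdim M) (fun j => rho ((rr j)^-1)%g).
Definition iotaE : 'M[F]_(kdim (Ind sHG (Res sHG M)), kdim M) :=
  @mxcol _ m (fun _ => kdim M) (kdim M) (fun i => rho (rr i)).

Lemma piE_hom : is_hom (M:=M) (N:=Ind sHG (Res sHG M)) piE.
Proof.
move=> x Gx /=; rewrite /piE /IndMx mul_mxrow mul_mxrow_mxblock; apply: eq_mxrow => k.
rewrite (bigD1 (sig (x^-1)%g k)) //= big1 ?addr0 => [|j]; last first.
  move=> ne; have -> : (k == sig x j) = false.
    by rewrite eq_sym (sig_eq sHG) // (negbTE ne).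
  by rewrite mulmx0.
rewrite sig_sigV // eqxx -repr_mxM ?groupV ?(rrG sHG) // -repr_mxM;
  [|by rewrite groupV (rrG sHG)|by rewrite (subsetP sHG) // (hhH sHG)].
by rewrite /hh sig_sigV // !mulgA mulVg mul1g.
Qed.

Lemma iotaE_hom : is_hom (M:=Ind sHG (Res sHG M)) (N:=M) iotaE.
Proof.
move=> x Gx /=; rewrite /iotaE /IndMx mul_mxblock_mxrow mxcol_mul; apply: eq_mxcol => i.
rewrite (bigD1 (sig x i)) //= big1 ?addr0 => [|j /negbTE ->]; last by rewrite mul0mx.
rewrite eqxx -repr_mxM ?(rrG sHG) //; last by rewrite (subsetP sHG) // (hhH sHG).
by rewrite /hh mulgKV repr_mxM ?(rrG sHG).
Qed.

Lemma piE_iotaE : piE *m iotaE = (m%:R : F) *: 1%:M.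
Proof.
rewrite /piE /iotaE mul_mxrow_mxcol (eq_bigr (fun _ => 1%:M)).
  by rewrite sumr_const card_ord scaler_nat.
by move=> i _; rewrite -repr_mxM ?groupV ?(rrG sHG) // mulVg repr_mx1.
Qed.

Lemma piE_free : row_free piE.
Proof.
apply/row_freeP.
exists (@mxcol _ m (fun _ => kdim M) (kdim M) (fun i => if i == i0 G H then rho (rr i) else 0)).
rewrite /piE mul_mxrow_mxcol (bigD1 (i0 G H)) //= big1 ?addr0 => [|j /negbTE ->]; last by rewrite mulmx0.
by rewrite eqxx -repr_mxM ?groupV ?(rrG sHG) // mulVg repr_mx1.
Qed.

End E1.

Section E2.
Variable N : kmod F H.
Local Notation rho := (krep N).

Definition fE2 : 'M[F]_(kdim N, kdim (Res sHG (Ind sHG N))) :=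
  @mxrow _ m (fun _ => kdim N) (kdim N) (fun j => if j == i0 G H then 1%:M else 0).
Definition gE2 : 'M[F]_(kdim (Res sHG (Ind sHG N)), kdim N) :=
  @mxcol _ m (fun _ => kdim N) (kdim N) (fun i => if i == i0 G H then 1%:M else 0).

Lemma fE2_hom : is_hom (M:=N) (N:=Res sHG (Ind sHG N)) fE2.
Proof.
move=> x Hx /=; have Gx := subsetP sHG x Hx.
rewrite /fE2 /IndMx mul_mxrow mul_mxrow_mxblock; apply: eq_mxrow => k.
rewrite (bigD1 (i0 G H)) //= big1 ?addr0 => [|j /negbTE ->]; last by rewrite mul0mx.
rewrite eqxx mul1mx sig_i0 // hh_i0 //.
by case: eqP => _; rewrite ?mulmx1 ?mulmx0.
Qed.

Lemma gE2_hom : is_hom (M:=Res sHG (Ind sHG N)) (N:=N) gE2.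
Proof.
move=> x Hx /=; have Gx := subsetP sHG x Hx.
rewrite /gE2 /IndMx mul_mxblock_mxrow mxcol_mul; apply: eq_mxcol => i.
rewrite (bigD1 (sig x i)) //= big1 ?addr0 => [|j /negbTE ->]; last by rewrite mul0mx.
rewrite eqxx (sig_eq sHG) // sig_i0 ?groupV //.
by case: eqP => [->|_]; rewrite ?mulmx1 ?mul1mx ?hh_i0 ?mulmx0 ?mul0mx.
Qed.

Lemma fE2_gE2 : fE2 *m gE2 = 1%:M.
Proof.
rewrite /fE2 /gE2 mul_mxrow_mxcol (bigD1 (i0 G H)) //= big1 ?addr0 => [|j /negbTE ->].
  by rewrite eqxx mulmx1.
by rewrite mul0mx.
Qed.

End E2.

Lemma bound_up (T : kmod F H) n :
  (m%:R : F) != 0 ->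
  (forall X : kmod F H, layer T n.+1 X) -> forall M : kmod F G, layer (Ind sHG T) n.+1 M.
Proof.
move=> m0 hT M.
apply: (layer_summand (f := piE M) (g := (m%:R : F)^-1 *: iotaE M)).
- exact: piE_hom.
- by apply: hom_scale; apply: iotaE_hom.
- by rewrite -scalemxAr piE_iotaE scalerA mulVf // scale1r.
- exact: layer_Ind.
Qed.

Lemma bound_down (T : kmod F G) n :
  (forall M : kmod F G, layer T n.+1 M) -> forall X : kmod F H, layer (Res sHG T) n.+1 X.
Proof.
move=> hT X.
apply: (layer_summand (f := fE2 X) (g := gE2 X)).
- exact: fE2_hom.
- exact: gE2_hom.
- exact: fE2_gE2.
- exact: layer_Res.
Qed.

End Summands.

End P4.
Import P4.

Module P5.

Section Proj.
Variables (F : fieldType) (gT : finGroupType) (G : {group gT}).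
Local Notation H := (1%G : {group gT}).
Local Notation sHG := (sub1G G).
Local Notation m := (ncos G H).
Local Notation sig := (@sig gT G H).
Local Notation hh := (@hh gT G H).
Local Notation rr := (@rr gT G H).

Lemma hh_triv x i : x \in G -> hh x i = 1%g.
Proof. by move=> Gx; apply/set1P; exact: (hhH sHG). Qed.

Lemma rr_sig x i : x \in G -> rr (sig x i) = (rr i * x)%g.
Proof.
move=> Gx; have := hh_triv i Gx; rewrite /P2.hh => /eqP.
by rewrite -eq_mulgV1 => /eqP ->.
Qed.

Lemma Ind_proj (N : kmod F H) : projective (Ind sHG N).
Proof.
move=> X Y g h hg rg hh0.
case/row_fullP: rg => B Bg.
set d := kdim N.
pose hb := @submxcol _ m (fun _ => d) _ h.
pose l := @mxcol _ m (fun _ => d) (kdim X)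
  (fun i => hb i *m krep Y ((rr i)^-1)%g *m B *m krep X (rr i)).
have hbE : forall x i, x \in G -> hb (sig x i) = hb i *m krep Y x.
  move=> x i Gx; have := hh0 x Gx.
  rewrite -(submxcolK h) /= /IndMx mul_mxblock_mxrow mxcol_mul.
  move/eq_mxcolP => /(_ i).
  rewrite (bigD1 (sig x i)) //= big1 ?addr0 => [|j /negbTE ->]; last by rewrite mul0mx.
  by rewrite eqxx hh_triv // repr_mx1 mul1mx.
exists l; split; last first.
  rewrite /l mxcol_mul -[RHS](submxcolK h); apply: eq_mxcol => i.
  rewrite -[_ *m krep X _ *m g]mulmxA (hg _ (rrG sHG i)) mulmxA -(mulmxA _ B g) Bg mulmx1.
  by rewrite -mulmxA -repr_mxM ?groupV ?(rrG sHG) // mulVg repr_mx1 mulmx1.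
move=> x Gx /=; rewrite /l /IndMx mul_mxblock_mxrow mxcol_mul; apply: eq_mxcol => i.
rewrite (bigD1 (sig x i)) //= big1 ?addr0 => [|j /negbTE ->]; last by rewrite mul0mx.
rewrite eqxx hh_triv // repr_mx1 mul1mx hbE // rr_sig //.
rewrite invMg !repr_mxM ?groupV ?(rrG sHG) //.
by rewrite !mulmxA repr_mxK.
Qed.

End Proj.

End P5.
Import P5.

Module P6.

Section Cok.
Variables (F : fieldType) (gT : finGroupType) (G : {group gT}).
Local Notation mod := (kmod F G).
Variables (M Q : mod) (e : 'M[F]_(kdim M, kdim Q)).
Hypothesis he : is_hom (M:=M) (N:=Q) e.

Lemma cok_module : mxmodule (krep Q) (genmx e).
Proof.
apply/mxmoduleP => x Gx.
by rewrite genmxE (eqmxMr _ (genmxE e)) -he // submxMl.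
Qed.

Definition Cok : mod := KMod _ (factmod_repr cok_module).
Definition cokm : 'M[F]_(kdim Q, kdim Cok) := in_factmod (genmx e) 1%:M.

Lemma cokm_hom : is_hom (M:=Q) (N:=Cok) cokm.
Proof.
move=> x Gx /=; rewrite /cokm -in_factmodE -[krep Q x]mul1mx.
by rewrite (in_factmodJ cok_module).
Qed.

Lemma cokm_full : row_full cokm.
Proof.
apply/row_fullP; exists (val_factmod 1%:M).
by rewrite /cokm -in_factmodE val_factmodK.
Qed.

Lemma cokm_ker : (e == kermx cokm)%MS.
Proof.
apply/andP; split.
  apply/sub_kermxP; rewrite /cokm -in_factmodE; apply/eqP.
  by rewrite in_factmod_eq0 genmxE.
rewrite -(genmxE e) -in_factmod_eq0 in_factmodE.
by apply/eqP; exact: mulmx_ker.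
Qed.

End Cok.

Lemma kermx_free (F : fieldType) m n p (A : 'M[F]_(m, n)) (B : 'M[F]_(n, p)) :
  row_free B -> (kermx (A *m B) == kermx A)%MS.
Proof.
case/row_freeP => B' BB'; apply/andP; split; apply/sub_kermxP.
  by rewrite -[_ *m A]mulmx1 -BB' !mulmxA -(mulmxA _ A) mulmx_ker mul0mx.
by rewrite mulmxA mulmx_ker mul0mx.
Qed.

Section Resol.
Variables (F : fieldType) (gT : finGroupType) (G : {group gT}).
Local Notation mod := (kmod F G).
Local Notation s1 := (sub1G G).

Definition E (M : mod) : mod := Ind s1 (Res s1 M).
Definition em (M : mod) : 'M[F]_(kdim M, kdim (E M)) := piE s1 M.

Lemma em_hom M : is_hom (M:=M) (N:=E M) (em M).
Proof. exact: piE_hom. Qed.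

Lemma em_free M : row_free (em M).
Proof. exact: piE_free. Qed.

Lemma E_proj M : projective (E M).
Proof. exact: Ind_proj. Qed.

Definition C (M : mod) : mod := Cok (em_hom M).
Definition cm (M : mod) : 'M[F]_(kdim (E M), kdim (C M)) := cokm (em_hom M).

Variable M0 : mod.

Fixpoint K (j : nat) : mod := match j with 0 => M0 | j'.+1 => C (K j') end.

Definition Xb (b : bool) (j : nat) : mod := if b then E (K j) else K j.

Definition mk (b1 b2 : bool) (j : nat) : 'M[F]_(kdim (Xb b1 j), kdim (Xb b2 j.+1)) :=
  match b1 as b1', b2 as b2' return 'M[F]_(kdim (Xb b1' j), kdim (Xb b2' j.+1)) with
  | true, true => cm (K j) *m em (K j.+1)
  | true, false => cm (K j)
  | false, _ => 0
  end.

Definition d0 (b : bool) : 'M[F]_(kdim M0, kdim (Xb b 0)) :=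
  match b as b' return 'M[F]_(kdim M0, kdim (Xb b' 0)) with
  | true => em M0
  | false => 0
  end.

Variable beta : nat -> bool.

Definition Xf (j : nat) : mod := match j with 0 => M0 | j'.+1 => Xb (beta j') j' end.

Definition df (j : nat) : 'M[F]_(kdim (Xf j), kdim (Xf j.+1)) :=
  match j as j0 return 'M[F]_(kdim (Xf j0), kdim (Xf j0.+1)) with
  | 0 => d0 (beta 0)
  | j'.+1 => mk (beta j') (beta j'.+1) j'
  end.

Lemma mk_hom b1 b2 j : is_hom (M:=Xb b1 j) (N:=Xb b2 j.+1) (mk b1 b2 j).
Proof.
case: b1; case: b2 => /=; rewrite ?hom0 //.
- apply: (@hom_mul _ _ _ (E (K j)) (K j.+1) (E (K j.+1))); [exact: cokm_hom | exact: em_hom].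
- exact: cokm_hom.
- exact: hom0.
- exact: hom0.
Qed.

Lemma d0_hom b : is_hom (M:=M0) (N:=Xb b 0) (d0 b).
Proof. case: b; [exact: em_hom | exact: hom0]. Qed.

Lemma df_hom : complex_hom df.
Proof. by case=> [|j]; [exact: d0_hom | exact: mk_hom]. Qed.

Lemma cm_ker j : (em (K j) == kermx (cm (K j)))%MS.
Proof. exact: cokm_ker. Qed.

Lemma mk_ker b1 b2 j : (mk true b1 j == kermx (mk b1 b2 j.+1))%MS.
Proof.
case: b1; case: b2; cbv delta [mk] iota beta.
- apply/eqmxP; apply: (eqmx_trans (eqmxMfull _ (cokm_full _))).
  exact: (eqmx_trans (eqmxP (cm_ker j.+1))
     (eqmx_sym (eqmxP (kermx_free (cm (K j.+1)) (em_free (K j.+2)))))).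
- apply/eqmxP; apply: (eqmx_trans (eqmxMfull _ (cokm_full _))).
  exact: (eqmxP (cm_ker j.+1)).
- apply/andP; split; first by rewrite kermx0 submx1.
  by rewrite kermx0 sub1mx; exact: cokm_full.
- apply/andP; split; first by rewrite kermx0 submx1.
  by rewrite kermx0 sub1mx; exact: cokm_full.
Qed.

Lemma d0_ker b2 : (d0 true == kermx (mk true b2 0))%MS.
Proof.
case: b2; cbv delta [mk d0] iota beta; last exact: (cm_ker 0).
apply/eqmxP; exact: (eqmx_trans (eqmxP (cm_ker 0))
     (eqmx_sym (eqmxP (kermx_free (cm (K 0)) (em_free (K 1)))))).
Qed.

End Resol.

End P6.
Import P6.


Section OmegaAll.
Variables (F : fieldType) (gT : finGroupType) (G : {group gT}).

Lemma d0_free_b (M0 : kmod F G) b : b = true -> row_free (d0 M0 b).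
Proof. by move->; exact: em_free. Qed.

Lemma Xb_proj (M0 : kmod F G) b j : b = true -> projective (Xb M0 b j).
Proof. by move->; exact: E_proj. Qed.

Lemma d0_ker_b (M0 : kmod F G) b b2 : b = true -> (d0 M0 b == kermx (mk M0 b b2 0))%MS.
Proof. by move->; exact: d0_ker. Qed.

Lemma mk_ker_b (M0 : kmod F G) b0 b1 b2 j : b0 = true ->
  (mk M0 b0 b1 j == kermx (mk M0 b1 b2 j.+1))%MS.
Proof. by move->; exact: mk_ker. Qed.

Lemma mk_full_b (M0 : kmod F G) b1 b2 j : b1 = true -> b2 = false -> row_full (mk M0 b1 b2 j).
Proof. by move=> -> ->; exact: cokm_full. Qed.

Lemma Omega_all (i : nat_inf) (X : kmod F G) : Omega i X.
Proof.
case: i => [[|n]|] //=.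
  exists (Xf X (fun j => j < n.+1)%N), (df X (fun j => j < n.+1)%N); split => //.
  - exact: df_hom.
  - exact: d0_free_b.
  - case=> [|j] lt; split.
    + exact: Xb_proj.
    + exact: d0_ker_b.
    + exact: Xb_proj.
    + by apply: mk_ker_b; apply: ltnW.
  - by apply: (@mk_full_b X (n < n.+1)%N (n.+1 < n.+1)%N n); rewrite ?ltnn ?ltnSn.
exists (Xf X (fun _ => true)), (df X (fun _ => true)); split => //.
- exact: df_hom.
- exact: d0_free_b.
- case=> [|j]; split.
  + exact: Xb_proj.
  + exact: d0_ker_b.
  + exact: Xb_proj.
  + exact: mk_ker_b.
Qed.

End OmegaAll.

Lemma min_exists (P : nat -> Prop) : (exists n, P n) ->
  exists n, P n /\ forall m, P m -> (n <= m)%N.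
Proof.
move=> [n Pn]; apply: NNPP => nomin.
have : forall k, forall j, (j <= k)%N -> ~ P j.
  elim=> [|k IH] j.
    rewrite leqn0 => /eqP -> P0; apply: nomin; exists 0%N; split => // m _.
  move=> le; case: (eqVneq j k.+1) => [-> Pk|ne]; last first.
    by apply: IH; lia.
  apply: nomin; exists k.+1; split => // m Pm; rewrite leqNgt; apply/negP => lt.
  exact: (IH m lt).
by move/(_ n n (leqnn n)).
Qed.

Lemma ed_eq (F : fieldType) (gT : finGroupType) (G1 G2 : {group gT})
  (C1 : subcat F G1) (C2 : subcat F G2) :
  (forall n, ed_bound C1 n <-> ed_bound C2 n) -> ed C1 = ed C2.
Proof.
move=> hb; rewrite /ed.
case: excluded_middle_informative => [h1|h1]; case: excluded_middle_informative => [h2|h2] //.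
- congr Fin.
  set P1 := fun n => _; set P2 := fun n => _.
  have [hm1 mn1] := epsilon_spec (inhabits 0%N) P1 (min_exists h1).
  have [hm2 mn2] := epsilon_spec (inhabits 0%N) P2 (min_exists h2).
  apply/eqP; rewrite eqn_leq; apply/andP; split.
    by apply: mn1; apply/hb.
  by apply: mn2; apply/hb.
- by exfalso; apply: h2; case: h1 => n /hb; exists n.
- by exfalso; apply: h1; case: h2 => n /hb; exists n.
Qed.

Theorem corollary5 (F : fieldType) (gT : finGroupType) (G P : {group gT})
  (p : nat) (charFp : p \in [pchar F]%R) (sylP : (p.-Sylow(G) P)%g) (i : nat_inf) :
  ed (Omega (F := F) (G := P) i) = ed (Omega (F := F) (G := G) i).
Proof.
have sPG : P \subset G := pHall_sub sylP.
have m0 : ((ncos G P)%:R : F) != 0.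
  rewrite -(dvdn_pcharf charFp) -(p'natE _ (pcharf_prime charFp)).
  by case/and3P: sylP.
apply: ed_eq => n; split.
- case=> T hT; exists (Ind sPG T) => M _.
  apply: (bound_up sPG m0) => X; apply: hT; exact: Omega_all.
- case=> T hT; exists (Res sPG T) => X _.
  apply: bound_down => M; apply: hT; exact: Omega_all.
Qed.
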